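(* In an ample-reserves equilibrium, the bank-level reserves $\tilde r$ and loans $\tilde\ell$, as functions of $(i,i_r)$ determined by the two equations $\frac{1+i}{1+i_r-\gamma'(\tilde r)}-1-\eta'(\tilde\ell)=0$ and $\gamma'(\tilde r)\tilde r-\gamma(\tilde r)+\eta'(\tilde\ell)\tilde\ell-\eta(\tilde\ell)-k=0$ (with $1+i_r-\gamma'(\tilde r)>0$), satisfy $$\frac{\partial\tilde\ell}{\partial i}>0,\qquad \frac{\partial\tilde r}{\partial i}<0,\qquad \frac{\partial\tilde\ell}{\partial i_r}<0,\qquad \frac{\partial\tilde r}{\partial i_r}>0.$$
   Context: Bank cost functions $\gamma,\eta:[0,\infty)\to[0,\infty)$ are twice differentiable with $\gamma',\gamma''>0$ and $\eta',\eta''>0$ on $(0,\infty)$, $\gamma(0)=\gamma'(0)=\eta(0)=\eta'(0)=0$; $k>0$ is an entry cost; $i\ge0$ is the nominal interest rate and $i_r$ the interest on reserves. In an ample-reserves equilibrium the bank's lending constraint does not bind and $\tilde r,\tilde\ell>0$ solve the two stated equations. *)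

(* Defs.v *)
From Stdlib Require Import Reals Lra.
From Coquelicot Require Import Coquelicot.
Open Scope R_scope.

(* Bank cost function on [0,oo): twice differentiable on (0,oo) with
   c' > 0 and c'' > 0 there, c(0) = 0 and right derivative c'(0) = 0.
   c' is represented by Coquelicot's total operator [Derive c]. *)
Definition bank_cost (c : R -> R) : Prop :=
  (forall x, 0 < x -> ex_derive c x) /\
  (forall x, 0 < x -> ex_derive (Derive c) x) /\
  (forall x, 0 < x -> 0 < Derive c x) /\
  (forall x, 0 < x -> 0 < Derive (Derive c) x) /\
  c 0 = 0 /\
  filterlim (fun h => (c h - c 0) / h) (at_right 0) (locally 0).

Definition eq1 (gamma eta : R -> R) (i ir r l : R) : R :=
  (1 + i) / (1 + ir - Derive gamma r) - 1 - Derive eta l.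

Definition eq2 (gamma eta : R -> R) (k r l : R) : R :=
  Derive gamma r * r - gamma r + Derive eta l * l - eta l - k.

Definition ample_eq (gamma eta : R -> R) (k i ir r l : R) : Prop :=
  0 < r /\ 0 < l /\ 0 < 1 + ir - Derive gamma r /\
  eq1 gamma eta i ir r l = 0 /\ eq2 gamma eta k r l = 0.

(* Main.v *)
Require Import Defs.
From Stdlib Require Import Reals Lra Psatz.
From Coquelicot Require Import Coquelicot.
Open Scope R_scope.

Lemma key (gamma eta : R -> R) (k : R) (I IR Rf L : R -> R) (t0 dI dIR dR dL : R) :
  bank_cost gamma -> bank_cost eta ->
  is_derive I t0 dI -> is_derive IR t0 dIR -> is_derive Rf t0 dR -> is_derive L t0 dL ->
  locally t0 (fun t => ample_eq gamma eta k (I t) (IR t) (Rf t) (L t)) ->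
  (dIR - dR * Derive (Derive gamma) (Rf t0)) * (1 + Derive eta (L t0))
    + (1 + IR t0 - Derive gamma (Rf t0)) * (dL * Derive (Derive eta) (L t0)) - dI = 0 /\
  dR * Derive (Derive gamma) (Rf t0) * Rf t0 + dL * Derive (Derive eta) (L t0) * L t0 = 0.
Proof.
  intros [g1 [g2 _]] [e1 [e2 _]] HI HIR HR HL Hloc.
  assert (H0 : ample_eq gamma eta k (I t0) (IR t0) (Rf t0) (L t0)).
  { destruct Hloc as [eps He]. apply He. apply ball_center. }
  destruct H0 as [r0 [l0 [D0 _]]].
  assert (dg : is_derive (fun t => Derive gamma (Rf t)) t0 (dR * Derive (Derive gamma) (Rf t0))).
  { apply (is_derive_comp (Derive gamma) Rf t0). apply Derive_correct; auto. exact HR. }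
  assert (de : is_derive (fun t => Derive eta (L t)) t0 (dL * Derive (Derive eta) (L t0))).
  { apply (is_derive_comp (Derive eta) L t0). apply Derive_correct; auto. exact HL. }
  assert (dG : is_derive (fun t => gamma (Rf t)) t0 (dR * Derive gamma (Rf t0))).
  { apply (is_derive_comp gamma Rf t0). apply Derive_correct; auto. exact HR. }
  assert (dE : is_derive (fun t => eta (L t)) t0 (dL * Derive eta (L t0))).
  { apply (is_derive_comp eta L t0). apply Derive_correct; auto. exact HL. }
  split.
  - set (F := fun t => (1 + IR t - Derive gamma (Rf t)) * (1 + Derive eta (L t)) - (1 + I t)).
    assert (HF : is_derive F t0 ((dIR - dR * Derive (Derive gamma) (Rf t0)) * (1 + Derive eta (L t0))
    + (1 + IR t0 - Derive gamma (Rf t0)) * (dL * Derive (Derive eta) (L t0)) - dI)).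
    { unfold F.
      assert (A := is_derive_minus _ _ _ _ _ (is_derive_plus _ _ _ _ _ (is_derive_const 1 t0) HIR) dg).
      assert (B := is_derive_plus _ _ _ _ _ (is_derive_const 1 t0) de).
      assert (C := is_derive_mult _ _ _ _ _ A B Rmult_comm).
      assert (E := is_derive_minus _ _ _ _ _ C (is_derive_plus _ _ _ _ _ (is_derive_const 1 t0) HI)).
      simpl in E. unfold minus, plus, opp, mult, zero in E; simpl in E.
      eapply is_derive_ext; [|eapply is_derive_Reals; apply is_derive_Reals in E; 
        match goal with |- derivable_pt_lim _ _ ?v => replace v with (((0 + dIR + - (dR * Derive (Derive gamma) (Rf t0))) * (1 + Derive eta (L t0)) + (1 + IR t0 + - Derive gamma (Rf t0)) * (0 + dL * Derive (Derive eta) (L t0))) + - (0 + dI)) by ring end; exact E].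
      intro t; simpl; ring. }
    assert (HF0 : is_derive F t0 0).
    { apply is_derive_ext_loc with (f := fun _ => 0).
      2: apply (is_derive_const (K:=R_AbsRing) (V:=R_NormedModule) 0 t0).
      destruct Hloc as [eps He]. exists eps. intros t Ht.
      destruct (He t Ht) as [r [l [D [q1 _]]]]. unfold eq1 in q1. unfold F.
      assert (Hq : (1 + I t) / (1 + IR t - Derive gamma (Rf t)) = 1 + Derive eta (L t)) by lra.
      cbv beta. rewrite <- Hq. unfold Rdiv. rewrite (Rmult_comm (1 + I t)), <- Rmult_assoc, Rinv_r; lra. }
    apply is_derive_unique in HF. apply is_derive_unique in HF0. congruence.
  - set (F := fun t => Derive gamma (Rf t) * Rf t - gamma (Rf t) + Derive eta (L t) * L t - eta (L t) - k).
    assert (HF : is_derive F t0 (dR * Derive (Derive gamma) (Rf t0) * Rf t0 + dL * Derive (Derive eta) (L t0) * L t0)).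
    { unfold F.
      assert (A := is_derive_mult _ _ _ _ _ dg HR Rmult_comm).
      assert (B := is_derive_mult _ _ _ _ _ de HL Rmult_comm).
      assert (E := is_derive_minus _ _ _ _ _ (is_derive_minus _ _ _ _ _ (is_derive_plus _ _ _ _ _ (is_derive_minus _ _ _ _ _ A dG) B) dE) (is_derive_const k t0)).
      simpl in E. unfold minus, plus, opp, mult, zero in E; simpl in E.
      eapply is_derive_ext; [|eapply is_derive_Reals; apply is_derive_Reals in E; 
        match goal with |- derivable_pt_lim _ _ ?v => replace v with
        (dR * Derive (Derive gamma) (Rf t0) * Rf t0 + Derive gamma (Rf t0) * dR + - (dR * Derive gamma (Rf t0)) + (dL * Derive (Derive eta) (L t0) * L t0 + Derive eta (L t0) * dL) + - (dL * Derive eta (L t0)) + - 0) by ring end; exact E].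
      intro t; simpl; ring. }
    assert (HF0 : is_derive F t0 0).
    { apply is_derive_ext_loc with (f := fun _ => 0).
      2: apply (is_derive_const (K:=R_AbsRing) (V:=R_NormedModule) 0 t0).
      destruct Hloc as [eps He]. exists eps. intros t Ht.
      destruct (He t Ht) as [r [l [D [_ q2]]]]. unfold eq2 in q2. unfold F. cbv beta. lra. }
    apply is_derive_unique in HF. apply is_derive_unique in HF0. congruence.
Qed.

Theorem mainTheorem2
  (gamma eta : R -> R) (k : R) (rt lt : R -> R -> R) (i0 ir0 delta : R) :
  bank_cost gamma -> bank_cost eta -> 0 < k ->
  0 <= i0 -> 0 < delta ->
  (forall i ir, Rabs (i - i0) < delta -> Rabs (ir - ir0) < delta ->
     ample_eq gamma eta k i ir (rt i ir) (lt i ir)) ->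
  ex_derive (fun i => rt i ir0) i0 -> ex_derive (fun i => lt i ir0) i0 ->
  ex_derive (fun ir => rt i0 ir) ir0 -> ex_derive (fun ir => lt i0 ir) ir0 ->
  0 < Derive (fun i => lt i ir0) i0 /\
  Derive (fun i => rt i ir0) i0 < 0 /\
  Derive (fun ir => lt i0 ir) ir0 < 0 /\
  0 < Derive (fun ir => rt i0 ir) ir0.
Proof.
  intros Hg He Hk Hi0 Hd Hae d1 d2 d3 d4.
  assert (H0 : ample_eq gamma eta k i0 ir0 (rt i0 ir0) (lt i0 ir0)).
  { apply Hae; rewrite Rminus_eq_0, Rabs_R0; lra. }
  destruct H0 as [r0 [l0 [D0 _]]].
  pose proof Hg as [_ [_ [gp [gpp _]]]]. pose proof He as [_ [_ [ep [epp _]]]].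
  specialize (gp _ r0). specialize (gpp _ r0). specialize (ep _ l0). specialize (epp _ l0).
  destruct (key gamma eta k (fun t => t) (fun _ => ir0) (fun t => rt t ir0) (fun t => lt t ir0)
     i0 1 0 _ _ Hg He (is_derive_id (K:=R_AbsRing) i0) (is_derive_const (K:=R_AbsRing) (V:=R_NormedModule) ir0 i0)
     (Derive_correct _ _ d1) (Derive_correct _ _ d2)) as [A1 A2].
  { exists (mkposreal _ Hd). intros t Ht. apply Hae. exact Ht. rewrite Rminus_eq_0, Rabs_R0; lra. }
  destruct (key gamma eta k (fun _ => i0) (fun t => t) (fun t => rt i0 t) (fun t => lt i0 t)
     ir0 0 1 _ _ Hg He (is_derive_const (K:=R_AbsRing) (V:=R_NormedModule) i0 ir0) (is_derive_id (K:=R_AbsRing) ir0)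
     (Derive_correct _ _ d3) (Derive_correct _ _ d4)) as [B1 B2].
  { exists (mkposreal _ Hd). intros t Ht. apply Hae. rewrite Rminus_eq_0, Rabs_R0; lra. exact Ht. }
  simpl in A1, A2, B1, B2.
  set (G := Derive (Derive gamma) (rt i0 ir0)) in *.
  set (H := Derive (Derive eta) (lt i0 ir0)) in *.
  set (h := Derive eta (lt i0 ir0)) in *.
  set (Dd := 1 + ir0 - Derive gamma (rt i0 ir0)) in *.
  set (r := rt i0 ir0) in *. set (l := lt i0 ir0) in *.
  set (a := Derive (fun i => lt i ir0) i0) in *.
  set (b := Derive (fun i => rt i ir0) i0) in *.
  set (c := Derive (fun ir => lt i0 ir) ir0) in *.
  set (d := Derive (fun ir => rt i0 ir) ir0) in *.
  assert (Gr : 0 < G * r) by nra. assert (Hl : 0 < H * l) by nra.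
  assert (Ha : 0 < a).
  { destruct (Rle_or_lt a 0) as [Ha|Ha]; [|exact Ha].
    assert (E1 : b * (G * r) = - a * (H * l)) by lra.
    assert (0 <= - a * (H * l)) by (apply Rmult_le_pos; lra).
    assert (0 <= b).
    { destruct (Rle_or_lt 0 b) as [|Hb]; auto.
      assert (b * (G * r) < 0) by (apply Rmult_neg_pos; lra). lra. }
    assert (0 <= b * G * (1 + h)) by (apply Rmult_le_pos; [apply Rmult_le_pos|]; lra).
    assert (0 <= Dd * (- a * H)) by (apply Rmult_le_pos; [|apply Rmult_le_pos]; lra).
    nra. }
  assert (Hc : c < 0).
  { destruct (Rle_or_lt 0 c) as [Hc|Hc]; [|exact Hc].
    assert (E1 : d * (G * r) = - c * (H * l)) by lra.
    assert (0 <= c * (H * l)) by (apply Rmult_le_pos; lra).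
    assert (d <= 0).
    { destruct (Rle_or_lt d 0) as [|Hb]; auto.
      assert (0 < d * (G * r)) by (apply Rmult_lt_0_compat; lra). lra. }
    assert (0 <= - d * G * (1 + h)) by (apply Rmult_le_pos; [apply Rmult_le_pos|]; lra).
    assert (0 <= Dd * (c * H)) by (apply Rmult_le_pos; [|apply Rmult_le_pos]; lra).
    nra. }
  split; [exact Ha|]. split.
  { assert (E1 : b * (G * r) = - (a * (H * l))) by lra.
    assert (0 < a * (H * l)) by (apply Rmult_lt_0_compat; lra).
    destruct (Rle_or_lt 0 b) as [Hb|Hb]; auto.
    assert (0 <= b * (G * r)) by (apply Rmult_le_pos; lra). lra. }
  split; [exact Hc|].
  { assert (E1 : d * (G * r) = - (c * (H * l))) by lra.
    assert (c * (H * l) < 0) by (apply Rmult_neg_pos; lra).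
    destruct (Rle_or_lt d 0) as [Hb|Hb]; auto.
    assert (d * (G * r) <= 0) by (apply Rmult_le_0_r; lra). lra. }
Qed.
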